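(* Let $C$ be an $(n,n-b)$-code, let $d\in\{0,1,\dots,b\}$, and let $C'$ be any $(m,m-1)$ MDS code. The following are equivalent: (a) $C$ is $\operatorname{rMDS}^d(m)$; (b) $C'\otimes C$ is a $(1,b-d)$-relaxed $(m,n,1,b)$-MR tensor code.
   Context: An $(n,k)$-code is a $k$-dimensional subspace of $\mathbb F^n$ with a $k\times n$ generator matrix. For a $k\times n$ matrix $V$ and $A\subseteq[n]$, $V|_A$ is the submatrix of columns in $A$. For $A_1,\dots,A_\ell\subseteq[n]$, $\mathcal G_{A_1,\dots,A_\ell}[V]$ is the $\ell k\times(k+\sum|A_i|)$ block matrix whose $i$-th block row has $I_k$ in the first block column and $V|_{A_i}$ in block column $i+1$, zeros elsewhere. Sets are $V$-saturated if $\operatorname{rank}\mathcal G_{A_1,\dots,A_\ell}[V]=\ell k$, and have the $k$-dimensional saturation property if they are $W$-saturated for a generic $k\times n$ matrix $W$ (independent indeterminate entries). An $(n,k)$-code with generator matrix $G$ is $\operatorname{rMDS}^d(\ell)$ ($0\le d\le n-k$) if every family $A_1,\dots,A_\ell$ with the $(k+d)$-dimensional saturation property is $G$-saturated. Tensor codes: for an $(m,m-a)$-code $C_1$ and an $(n,n-b)$-code $C_2$, $C_1\otimes C_2$ is the code of $m\times n$ arrays whose columns lie in $C_1$ and rows in $C_2$. An erasure pattern $E\subseteq[m]\times[n]$ is correctable by a code if every codeword is determined by its entries outside $E$. $\mathcal E^{m,n}_{a,b}$ denotes the set of patterns correctable by an $(m,n,a,b)$-maximally recoverable tensor code over the relevant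 field characteristic, i.e. by $C_1\otimes C_2$ where $C_1,C_2$ have generic generator matrices of sizes $(m-a)\times m$ and $(n-b)\times n$. For $a'\le a$, $b'\le b$, $C_1\otimes C_2$ (with $C_1$ an $(m,m-a)$-code and $C_2$ an $(n,n-b)$-code) is an $(a',b')$-relaxed $(m,n,a,b)$-MR tensor code if it corrects every $E\in\mathcal E^{m,n}_{a',b'}$. *)

(* Defs.v *)
From HB Require Import structures.
From mathcomp Require Import all_boot all_order all_algebra.
From mathcomp Require Import fraction.
From mathcomp Require Import mpoly.

Set Implicit Arguments.
Unset Strict Implicit.
Unset Printing Implicit Defensive.

Import GRing.Theory.
Local Open Scope ring_scope.

(* Codes are given by (full-row-rank) generator matrices; the code is the
   row space.  An (n,k)-code with generator matrix G : 'M_(k,n). *)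

(* V|_A : the submatrix of the columns of V indexed by A (in increasing order) *)
Definition restr_cols (R : Type) (k n : nat) (V : 'M[R]_(k, n))
  (A : {set 'I_n}) : 'M[R]_(k, #|A|) :=
  colsub (@enum_val _ (mem A)) V.

Definition satmx (R : pzRingType) (k n l : nat) (V : 'M[R]_(k, n))
  (A : 'I_l -> {set 'I_n}) :=
  row_mx (\mxcol_(i < l) (1%:M : 'M[R]_k))
         (\mxblock_(i < l, j < l)
             (if i == j then restr_cols V (A j) else 0 : 'M[R]_(k, #|A j|))).

Definition saturated (R : fieldType) (k n l : nat) (V : 'M[R]_(k, n))
  (A : 'I_l -> {set 'I_n}) : Prop :=
  \rank (satmx V A) = (l * k)%N.

Definition ratfun (F : fieldType) (N : nat) := {fraction {mpoly F[N]}}.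

Definition genmx (F : fieldType) (k n : nat) : 'M[ratfun F (k * n)]_(k, n) :=
  \matrix_(i, j) (tofrac 'X_(mxvec_index i j)).

Definition sat_property (F : fieldType) (k n l : nat)
  (A : 'I_l -> {set 'I_n}) : Prop :=
  saturated (genmx F k n) A.

Definition rMDS (F : fieldType) (k n : nat) (d l : nat) (G : 'M[F]_(k, n)) : Prop :=
  forall A : 'I_l -> {set 'I_n}, sat_property F (k + d) A -> saturated G A.

Definition MDS (F : fieldType) (k n : nat) (G : 'M[F]_(k, n)) : Prop :=
  forall c : 'rV[F]_n, (c <= G)%MS -> c != 0 ->
    (n - k + 1 <= #|[set j | c ord0 j != 0%R]|)%N.

Definition in_tensor (R : fieldType) (k1 m k2 n : nat)
  (G1 : 'M[R]_(k1, m)) (G2 : 'M[R]_(k2, n)) (X : 'M[R]_(m, n)) : Prop :=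
  (forall j, ((col j X)^T <= G1)%MS) /\ (forall i, (row i X <= G2)%MS).

Definition correctable (R : fieldType) (k1 m k2 n : nat)
  (G1 : 'M[R]_(k1, m)) (G2 : 'M[R]_(k2, n)) (E : {set 'I_m * 'I_n}) : Prop :=
  forall X Y : 'M[R]_(m, n), in_tensor G1 G2 X -> in_tensor G1 G2 Y ->
    (forall i j, (i, j) \notin E -> X i j = Y i j) -> X = Y.

Definition gen_tensor_N (m n a b : nat) := ((m - a) * m + (n - b) * n)%N.

Definition genG1 (F : fieldType) (m n a b : nat) :
  'M[ratfun F (gen_tensor_N m n a b)]_(m - a, m) :=
  \matrix_(i, j) (tofrac 'X_(lshift ((n - b) * n) (mxvec_index i j))).

Definition genG2 (F : fieldType) (m n a b : nat) :
  'M[ratfun F (gen_tensor_N m n a b)]_(n - b, n) :=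
  \matrix_(i, j) (tofrac 'X_(rshift ((m - a) * m) (mxvec_index i j))).

Definition MR_correctable (F : fieldType) (m n a b : nat)
  (E : {set 'I_m * 'I_n}) : Prop :=
  correctable (genG1 F m n a b) (genG2 F m n a b) E.

Definition relaxed_MR (F : fieldType) (m n a b a' b' : nat)
  (G1 : 'M[F]_(m - a, m)) (G2 : 'M[F]_(n - b, n)) : Prop :=
  (a' <= a)%N /\ (b' <= b)%N /\
  forall E : {set 'I_m * 'I_n}, @MR_correctable F m n a' b' E -> correctable G1 G2 E.

(* Main.v *)
Require Import Defs.
From HB Require Import structures.
From mathcomp Require Import all_boot all_order all_algebra.
From mathcomp Require Import fraction mpoly zify.
From Stdlib Require Import FunctionalExtensionality.
Set Implicit Arguments.
Unset Strict Implicit.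
Unset Printing Implicit Defensive.
Import GRing.Theory.
Local Open Scope ring_scope.


Lemma rowfree_ker (K : fieldType) p q (M : 'M[K]_(p,q)) :
  row_free M <-> (forall u : 'rV_p, u *m M = 0 -> u = 0).
Proof.
split.
  by move=> fM u uM; apply: (row_free_inj fM); rewrite uM mul0mx.
move=> H; rewrite -kermx_eq0; apply/eqP/row_matrixP => i; rewrite row0.
by apply: H; apply/sub_kermxP; rewrite row_sub.
Qed.

Lemma submxrow0 (K : fieldType) (l m : nat) (q_ : 'I_l -> nat) (j : 'I_l) :
  submxrow (0 : 'M[K]_(m, \sum_(i < l) q_ i)) j = 0.
Proof. by apply/matrixP => ? ?; rewrite !mxE. Qed.

Lemma satP (K : fieldType) k n l (V : 'M[K]_(k,n)) (A : 'I_l -> {set 'I_n}) :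
  saturated V A <-> (forall w : 'I_l -> 'rV_k, \sum_i w i = 0 ->
     (forall i, w i *m restr_cols V (A i) = 0) -> forall i, w i = 0).
Proof.
have E : (l * k)%N = (\sum_(i < l) k)%N by rewrite sum_nat_const card_ord.
have -> : saturated V A <-> row_free (satmx V A).
  by rewrite /saturated /row_free E; split=> [->|/eqP].
rewrite rowfree_ker.
have key : forall u : 'rV_(\sum_(i < l) k), u *m satmx V A =
   row_mx (\sum_i submxrow u i) (\mxrow_j (submxrow u j *m restr_cols V (A j))).
  move=> u; rewrite /satmx mul_mx_row -{1 2}[u]submxrowK mul_mxrow_mxcol.
  rewrite mul_mxrow_mxblock; congr row_mx.
    by apply: eq_bigr => i _; rewrite mulmx1.
  apply: eq_mxrow => j; rewrite (bigD1 j) //= eqxx big1 ?addr0 // => i /negPf ->.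
  by rewrite mulmx0.
split.
  move=> H w sw0 wA i.
  have e1 : \sum_i submxrow (\mxrow_i w i) i = \sum_i w i.
    by apply: eq_bigr => j _; rewrite mxrowK.
  have e2 : \mxrow_j (submxrow (\mxrow_i w i) j *m restr_cols V (A j)) = 0.
    rewrite -(mxrow0 (q_ := fun j : 'I_l => #|A j|) 1); apply: eq_mxrow => j.
    by rewrite mxrowK wA.
  have u0 : \mxrow_i w i = 0 by apply: H; rewrite key e1 e2 sw0 row_mx0.
  by rewrite -(mxrowK w i) u0 submxrow0.
move=> H u; rewrite key => /eqP; rewrite row_mx_eq0 => /andP[/eqP s0 /eqP r0].
rewrite -[u]submxrowK -(mxrow0 (q_ := fun _ : 'I_l => k) 1).
apply: eq_mxrow => i; apply: (H (fun i => submxrow u i) s0) => j.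
by have := congr1 (fun M => submxrow M j) r0; rewrite /= mxrowK submxrow0.
Qed.


Lemma parity (K : fieldType) m (G1 : 'M[K]_(m - 1, m)) :
  (0 < m)%N -> row_free G1 -> MDS G1 ->
  exists lam : 'cV_m, (forall i, lam i 0 != 0) /\
     (forall x : 'rV_m, (x <= G1)%MS <-> x *m lam = 0).
Proof.
move=> m0 fG mG.
have ar : (m - (m - 1) + 1 = 2)%N.
  by case: m m0 G1 fG mG => // m' _ _ _ _; rewrite subn1 /= subSnn.
have rG : \rank G1 = (m - 1)%N by apply/eqP.
have rk : \rank (kermx G1^T) = 1%N.
  by rewrite mxrank_ker mxrank_tr rG; apply/eqP; rewrite -(eqn_add2r (m - 1)) subnK ?leq_subr // add1n subn1 prednK.
have Knz : kermx G1^T != 0 by rewrite -mxrank_eq0 rk.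
have [i ri0] : exists i, row i (kermx G1^T) != 0.
  case: (boolP [exists i, row i (kermx G1^T) != 0]) => [/existsP//|/existsPn H].
  case/eqP: Knz; apply/row_matrixP => i; rewrite row0; exact/eqP/negPn/H.
set r := row i (kermx G1^T).
have rG0 : r *m G1^T = 0 by apply/sub_kermxP; rewrite row_sub.
exists r^T.
have Gl0 : G1 *m r^T = 0 by rewrite -[G1]trmxK -trmx_mul rG0 trmx0.
have iff : forall x : 'rV_m, (x <= G1)%MS <-> x *m r^T = 0.
  move=> x; split.
    by case/submxP => y ->; rewrite -mulmxA Gl0 mulmx0.
  move/sub_kermxP => xk.
  have Gk : (G1 <= kermx r^T)%MS by apply/sub_kermxP.
  have rr : \rank r^T = 1%N.
    apply/eqP; rewrite eqn_leq rank_leq_col lt0n mxrank_eq0.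
    by apply: contra ri0 => /eqP/(congr1 trmx); rewrite trmxK trmx0 => /eqP.
  have e : (kermx r^T <= G1)%MS.
    by rewrite -(mxrank_leqif_sup Gk).2 mxrank_ker rr rG.
  exact: submx_trans xk e.
split=> // j; apply/negP => /eqP lj0.
have dk : (delta_mx 0 j : 'rV_m) *m r^T = 0.
  rewrite -rowE; apply/rowP => a; rewrite ord1 [LHS]mxE [RHS]mxE; exact: lj0.
have /iff dG := dk.
have := mG _ dG; rewrite (_ : [set j0 | delta_mx 0 j 0 j0 != 0] = [set j]).
  rewrite cards1 ar => H; suff: (1 < 1)%N by [].
  by apply: H; rewrite -mxrank_eq0 mxrank_delta.
by apply/setP => a; rewrite !inE !mxE eqxx /=; case: (a == j); rewrite ?oner_eq0 ?eqxx.
Qed.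


Lemma restrE (K : fieldType) p k n (u : 'M[K]_(p, k)) (M : 'M[K]_(k, n)) S a t :
  (u *m restr_cols M S) a t = (u *m M) a (enum_val t).
Proof. by rewrite !mxE; apply: eq_bigr => c _; rewrite mxE. Qed.

Lemma corr_lam (K : fieldType) m n k (G1 : 'M[K]_(m - 1, m)) (G2 : 'M[K]_(k, n))
   (lam : 'cV_m) (E : {set 'I_m * 'I_n}) :
  (forall i, lam i 0 != 0) ->
  (forall x : 'rV_m, (x <= G1)%MS <-> x *m lam = 0) -> row_free G2 ->
  (forall w : 'I_m -> 'rV_k, \sum_i w i = 0 ->
     (forall i, w i *m restr_cols G2 (~: [set j | (i, j) \in E]) = 0) ->
     forall i, w i = 0) ->
  correctable G1 G2 E.
Proof.
move=> lnz lamP fG2 Hs X Y [cX rX] [cY rY] XY.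
apply/eqP; rewrite -subr_eq0; apply/eqP; set Z := X - Y.
have rZ : forall i, (row i Z <= G2)%MS by move=> i; rewrite /Z linearB /= addmx_sub ?eqmx_opp ?rX ?rY.
have cZ : forall j, (col j Z)^T *m lam = 0.
  move=> j; rewrite /Z linearB /= linearB /= mulmxBl.
  by rewrite (lamP _).1 // (lamP _).1 // subr0.
set w := fun i => row i Z *m pinvmx G2.
have wG : forall i, w i *m G2 = row i Z by move=> i; rewrite /w mulmxKpV.
have H0 := Hs (fun i => lam i 0 *: w i).
have s0 : \sum_i lam i 0 *: w i = 0.
  apply: (row_free_inj fG2); rewrite mul0mx mulmx_suml.
  apply/rowP => j; rewrite summxE [RHS]mxE.
  rewrite -[RHS](_ : ((col j Z)^T *m lam) 0 0 = 0); last by rewrite cZ mxE.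
  rewrite [RHS]mxE; apply: eq_bigr => i _; rewrite -scalemxAl wG !mxE mulrC.
  done.
have H1 := H0 s0.
have : forall i, lam i 0 *: w i = 0.
  apply: H1 => i; rewrite -scalemxAl; apply/rowP => t.
  rewrite [LHS]mxE restrE wG [RHS]mxE mxE.
  have := enum_valP t; rewrite !inE => /XY.
  by rewrite /Z !mxE => ->; rewrite subrr mulr0.
move=> H2; apply/row_matrixP => i; rewrite row0 -wG.
have := H2 i; move/eqP; rewrite scaler_eq0 (negPf (lnz i)) /= => /eqP ->.
by rewrite mul0mx.
Qed.

Lemma lam_corr (K : fieldType) m n k (G1 : 'M[K]_(m - 1, m)) (G2 : 'M[K]_(k, n))
   (lam : 'cV_m) (E : {set 'I_m * 'I_n}) :
  (forall i, lam i 0 != 0) ->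
  (forall x : 'rV_m, (x <= G1)%MS <-> x *m lam = 0) -> row_free G2 ->
  correctable G1 G2 E ->
  (forall w : 'I_m -> 'rV_k, \sum_i w i = 0 ->
     (forall i, w i *m restr_cols G2 (~: [set j | (i, j) \in E]) = 0) ->
     forall i, w i = 0).
Proof.
move=> lnz lamP fG2 Hc w s0 wA.
pose Z := \matrix_(i, j) ((lam i 0)^-1 * (w i *m G2) 0 j).
have rZ : forall i, row i Z = (lam i 0)^-1 *: (w i *m G2).
  by move=> i; apply/rowP => j; rewrite !mxE.
have tZ : in_tensor G1 G2 Z.
  split=> [j|i]; last by rewrite rZ scalemx_sub // submxMl.
  apply/(lamP _).2; apply/rowP => a; rewrite ord1 [RHS]mxE mxE.
  rewrite -[RHS](_ : (\sum_i w i *m G2) 0 j = 0); last by rewrite -mulmx_suml s0 mul0mx mxE.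
  rewrite summxE; apply: eq_bigr => i _; rewrite !mxE mulrAC mulVf ?mul1r //.
have t0 : in_tensor G1 G2 0.
  by split=> [j|i]; rewrite ?row0 ?sub0mx // (_ : (col j 0)^T = 0) ?sub0mx //;
     apply/matrixP => a b; rewrite !mxE.
have Z0 : Z = 0.
  apply: (Hc _ _ tZ t0) => i j ijE; rewrite [LHS]mxE [RHS]mxE.
  have jA : j \in ~: [set j | (i, j) \in E] by rewrite !inE.
  have := wA i; move/matrixP/(_ 0 (enum_rank_in jA j)).
  by rewrite restrE enum_rankK_in // [RHS]mxE => ->; rewrite mulr0.
move=> i; apply: (row_free_inj fG2); rewrite mul0mx.
have := rZ i; rewrite Z0 row0 => /esym/eqP; rewrite scaler_eq0 invr_eq0 (negPf (lnz i)) /=.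
by move/eqP.
Qed.


Lemma rowfree_det (K : fieldType) p q (B : 'M[K]_(p,q)) :
  row_free B <-> exists s : 'I_p -> 'I_q, \det (colsub s B) != 0.
Proof.
split.
  move=> fB; have fT : row_full B^T by rewrite /row_full mxrank_tr.
  exists (fullrankfun fT).
  have := fullrowsub_unit fT; rewrite unitmxE unitfE.
  by rewrite -det_tr trmx_mxsub trmxK.
case=> s; rewrite -unitfE -unitmxE -row_free_unit => fs.
rewrite /row_free eqn_leq rank_leq_row /=.
apply: (@leq_trans (\rank (colsub s B))); first by rewrite (eqP fs).
rewrite -mxrank_tr trmx_mxsub rowsubE -(mxrank_tr B).
exact: mxrankM_maxr.
Qed.

Lemma rowfree_transfer (A : comNzRingType) (K L : fieldType)
  (f : {rmorphism A -> K}) (g : {rmorphism A -> L}) (finj : injective f)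
  p q (M : 'M[A]_(p,q)) : row_free (map_mx g M) -> row_free (map_mx f M).
Proof.
move/rowfree_det => [s hs]; apply/rowfree_det; exists s.
move: hs; rewrite -!map_mxsub !det_map_mx.
apply: contra => /eqP h; apply/eqP.
have -> : \det (colsub s M) = 0 by apply: finj; rewrite h rmorph0.
by rewrite rmorph0.
Qed.

Lemma map_satmx (R S : pzRingType) (f : {rmorphism R -> S}) k n l
   (V : 'M[R]_(k, n)) (A : 'I_l -> {set 'I_n}) :
  map_mx f (satmx V A) = satmx (map_mx f V) A.
Proof.
rewrite /satmx map_row_mx; congr row_mx.
  apply/matrixP => i j; rewrite !mxE.
  by rewrite rmorphMn rmorph1.
apply/matrixP => i j; rewrite !mxE.
case: eqP => _; last by rewrite !mxE rmorph0.
by rewrite /restr_cols !mxE.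
Qed.

Lemma sat_rowfree (K : fieldType) k n l (V : 'M[K]_(k,n)) (A : 'I_l -> {set 'I_n}) :
  saturated V A <-> row_free (satmx V A).
Proof.
have E : (l * k)%N = (\sum_(i < l) k)%N by rewrite sum_nat_const card_ord.
by rewrite /saturated /row_free E; split=> [->|/eqP].
Qed.

Lemma gen_spec (F : fieldType) (N p n : nat) (sg : 'I_p -> 'I_n -> 'I_N)
  (sginj : forall i j i' j', sg i j = sg i' j' -> i = i' /\ j = j')
  (L : fieldType) (phi : {rmorphism F -> L}) (V : 'M[L]_(p,n))
  l (A : 'I_l -> {set 'I_n}) :
  saturated V A ->
  saturated (\matrix_(i, j) (tofrac 'X_(sg i j) : ratfun F N)) A.
Proof.
pose M : 'M[{mpoly F[N]}]_(p, n) := \matrix_(i, j) 'X_(sg i j).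
pose h (v : 'I_N) : L :=
  if [pick ij : 'I_p * 'I_n | sg ij.1 ij.2 == v] is Some ij then V ij.1 ij.2 else 0.
have -> : (\matrix_(i, j) (tofrac 'X_(sg i j) : ratfun F N)) = map_mx (@tofrac _) M.
  by apply/matrixP => i j; rewrite !mxE.
have eV : map_mx (mmap phi h) M = V.
  apply/matrixP => i j; rewrite !mxE mmapX mmap1U /h.
  case: pickP => [[i' j'] /= /eqP /sginj [-> ->] //|/(_ (i, j))].
  by rewrite /= eqxx.
rewrite !sat_rowfree => sV.
rewrite -map_satmx; apply: (rowfree_transfer (g := mmap phi h)).
  by move=> x y /eqP; rewrite tofrac_eq => /eqP.
by rewrite map_satmx eV.
Qed.


Lemma rank_colsub_le (K : fieldType) p q q' (s : 'I_q' -> 'I_q) (B : 'M[K]_(p,q)) :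
  (\rank (colsub s B) <= \rank B)%N.
Proof.
rewrite -mxrank_tr trmx_mxsub rowsubE -(mxrank_tr B).
exact: mxrankM_maxr.
Qed.

Lemma mds_of_sel (K : fieldType) m (G1 : 'M[K]_(m - 1, m)) : (0 < m)%N ->
  (forall i0, exists s : 'I_(m - 1) -> 'I_m, (forall r, s r != i0) /\ row_free (colsub s G1)) ->
  MDS G1.
Proof.
move=> m0 Hs c cG cnz.
have ar : (m - (m - 1) + 1 = 2)%N.
  by case: m m0 G1 Hs c cG cnz => // m' _ _ _ _ _ _; rewrite subn1 /= subSnn.
rewrite ar; set S := [set j | c 0 j != 0].
have [i0 Si0] : exists i0, i0 \in S.
  case: (boolP [exists j, c 0 j != 0]) => [/existsP[j Hj]|/existsPn H].
    by exists j; rewrite inE.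
  case/eqP: cnz; apply/rowP => j; rewrite mxE; exact/eqP/negPn/H.
case: (boolP [exists j, (j != i0) && (j \in S)]) => [/existsP[j /andP[ji Sj]]|/existsPn H].
  have : ([set i0; j] \subset S) by rewrite subUset !sub1set Si0 Sj.
  by move/subset_leq_card; rewrite cards2 eq_sym ji.
have [s [si0 fs]] := Hs i0.
case/submxP: cG => u cu.
have : colsub s c = 0.
  apply/rowP => r; rewrite !mxE; apply/eqP; apply: contraR (H (s r)) => h.
  by rewrite si0 inE h.
rewrite cu -mulmx_colsub => /eqP; rewrite -(mul0mx _ (colsub s G1)) => /eqP /(row_free_inj fs) u0.
by case/eqP: cnz; rewrite cu u0 mul0mx.
Qed.
Lemma gen_map (F : fieldType) (N p n : nat) (sg : 'I_p -> 'I_n -> 'I_N)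
  (sginj : forall i j i' j', sg i j = sg i' j' -> i = i' /\ j = j')
  (L : fieldType) (phi : {rmorphism F -> L}) (V : 'M[L]_(p,n)) :
  exists g : {rmorphism {mpoly F[N]} -> L}, map_mx g (\matrix_(i, j) 'X_(sg i j)) = V.
Proof.
pose h (v : 'I_N) : L :=
  if [pick ij : 'I_p * 'I_n | sg ij.1 ij.2 == v] is Some ij then V ij.1 ij.2 else 0.
exists (mmap phi h).
apply/matrixP => i j; rewrite !mxE.
have e := @mmapX N F L h phi U_(sg i j).
apply: (etrans e); rewrite mmap1U /h.
case: pickP => [[i' j'] /= /eqP /sginj [-> ->] //|/(_ (i, j))].
by rewrite /= eqxx.
Qed.

Lemma mxvec_index_inj p n (i i' : 'I_p) (j j' : 'I_n) :
  mxvec_index i j = mxvec_index i' j' -> i = i' /\ j = j'.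
Proof. by move/cast_ord_inj/enum_rank_inj => [-> ->]. Qed.


Lemma corrP (K : fieldType) m n k (G1 : 'M[K]_(m - 1, m)) (G2 : 'M[K]_(k, n))
   (E : {set 'I_m * 'I_n}) :
  (0 < m)%N -> row_free G1 -> MDS G1 -> row_free G2 ->
  correctable G1 G2 E <-> saturated G2 (fun i => ~: [set j | (i, j) \in E]).
Proof.
move=> m0 f1 mG f2; have [lam [lnz lamP]] := parity m0 f1 mG.
rewrite satP; split; first exact: lam_corr.
exact: corr_lam.
Qed.

Lemma gen_colsub_free (F : fieldType) (N p n : nat) (sg : 'I_p -> 'I_n -> 'I_N)
  (sginj : forall i j i' j', sg i j = sg i' j' -> i = i' /\ j = j')
  (s : 'I_p -> 'I_n) (sinj : injective s) :
  row_free (colsub s (\matrix_(i, j) (tofrac 'X_(sg i j) : ratfun F N))).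
Proof.
pose Q : 'M[F]_(p, n) := \matrix_(r, c) (c == s r)%:R.
have [g gQ] := gen_map sginj (@idfun F : {rmorphism F -> F}) Q.
have -> : (\matrix_(i, j) (tofrac 'X_(sg i j) : ratfun F N)) =
          map_mx (@tofrac _) (\matrix_(i, j) 'X_(sg i j)).
  by apply/matrixP => i j; rewrite !mxE.
rewrite -map_mxsub; apply: (rowfree_transfer (g := g)).
  by move=> x y /eqP; rewrite tofrac_eq => /eqP.
rewrite map_mxsub gQ (_ : colsub s Q = 1%:M) ?row_free_unit ?unitmx1 //.
apply/matrixP => r c; rewrite !mxE (inj_eq sinj) eq_sym.
done.
Qed.

Lemma free_of_colsub (K : fieldType) p q (s : 'I_p -> 'I_q) (B : 'M[K]_(p, q)) :
  row_free (colsub s B) -> row_free B.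
Proof.
move=> fs; rewrite /row_free eqn_leq rank_leq_row /=.
apply: (@leq_trans (\rank (colsub s B))); first by rewrite (eqP fs).
exact: rank_colsub_le.
Qed.

Lemma genG1_sel (F : fieldType) m n b' : (0 < m)%N -> forall i0 : 'I_m,
  exists s : 'I_(m - 1) -> 'I_m, (forall r, s r != i0) /\
    row_free (colsub s (genG1 F m n 1 b')).
Proof.
move=> m0 i0; pose s (r : 'I_(m - 1)) := lift i0 (cast_ord (subn1 m) r).
have sinj : injective s by move=> x y /lift_inj /cast_ord_inj.
exists s; split; first by move=> r; rewrite eq_sym neq_lift.
pose sg (i : 'I_(m - 1)) (j : 'I_m) : 'I_(gen_tensor_N m n 1 b') :=
  lshift ((n - b') * n) (mxvec_index i j).
have sginj : forall i j i' j', sg i j = sg i' j' -> i = i' /\ j = j'.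
  by move=> i j i' j' /lshift_inj /mxvec_index_inj.
rewrite /genG1; exact: (@gen_colsub_free F _ _ _ sg sginj s sinj).
Qed.

Lemma genG2_free (F : fieldType) m n a b' : (b' <= n)%N ->
  row_free (genG2 F m n a b').
Proof.
move=> bn; have le : (n - b' <= n)%N by rewrite leq_subr.
pose s (r : 'I_(n - b')) := widen_ord le r.
have sinj : injective s by move=> x y /(congr1 val) /= /val_inj.
pose sg (i : 'I_(n - b')) (j : 'I_n) : 'I_(gen_tensor_N m n a b') :=
  rshift ((m - a) * m) (mxvec_index i j).
have sginj : forall i j i' j', sg i j = sg i' j' -> i = i' /\ j = j'.
  by move=> i j i' j' /rshift_inj /mxvec_index_inj.
apply: (free_of_colsub (s := s)).
rewrite /genG2; exact: (@gen_colsub_free F _ _ _ sg sginj s sinj).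
Qed.

Lemma genG1_free (F : fieldType) m n b' : (0 < m)%N -> row_free (genG1 F m n 1 b').
Proof.
move=> m0; have [s [_ fs]] := genG1_sel F n b' m0 (Ordinal m0).
exact: free_of_colsub fs.
Qed.

Lemma sat_cast (K : fieldType) k k' n l (e : k = k') (V : 'M[K]_(k, n))
  (A : 'I_l -> {set 'I_n}) :
  saturated (castmx (e, erefl n) V) A <-> saturated V A.
Proof. by case: k' / e; rewrite castmx_id. Qed.

Lemma gen_equiv (F : fieldType) m n b d : (d <= b)%N -> (b <= n)%N ->
  forall A : 'I_m -> {set 'I_n},
  sat_property F (n - b + d) A <-> saturated (genG2 F m n 1 (b - d)) A.
Proof.
move=> db bn A.
have e : (n - (b - d) = n - b + d)%N by lia.
pose sg2 (i : 'I_(n - (b - d))) (j : 'I_n) : 'I_(gen_tensor_N m n 1 (b - d)) :=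
  rshift ((m - 1) * m) (mxvec_index i j).
have sg2inj : forall i j i' j', sg2 i j = sg2 i' j' -> i = i' /\ j = j'.
  by move=> i j i' j' /rshift_inj /mxvec_index_inj.
have sg1inj : forall (i : 'I_(n - b + d)) (j : 'I_n) i' j',
   mxvec_index i j = mxvec_index i' j' -> i = i' /\ j = j'.
  by move=> i j i' j' /mxvec_index_inj.
rewrite /sat_property; split.
  move=> H.
  have := @gen_spec F _ _ _ sg2 sg2inj _ ((@tofrac _) \o (@mpolyC _ F))
     (castmx (esym e, erefl n) (Defs.genmx F (n - b + d) n)) _ A.
  rewrite sat_cast => /(_ H).
  by rewrite /genG2.
move=> H.
have := @gen_spec F _ _ _ _ sg1inj _ ((@tofrac _) \o (@mpolyC _ F))
     (castmx (e, erefl n) (genG2 F m n 1 (b - d))) _ A.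
rewrite sat_cast => /(_ H).
by rewrite /Defs.genmx.
Qed.

Theorem theorem3p15 (F : fieldType) (m n b d : nat)
  (G : 'M[F]_(n - b, n)) (G' : 'M[F]_(m - 1, m)) :
  (b <= n)%N -> row_free G ->
  (d <= b)%N ->
  (0 < m)%N -> row_free G' -> @MDS F (m - 1) m G' ->
  @rMDS F (n - b) n d m G <-> @relaxed_MR F m n 1 b 1 (b - d) G' G.
Proof.
move=> bn fG db m0 fG' mG'.
have corrG := fun E => corrP E m0 fG' mG' fG.
have corrGen : forall E, @MR_correctable F m n 1 (b - d) E <->
    saturated (genG2 F m n 1 (b - d)) (fun i => ~: [set j | (i, j) \in E]).
  move=> E; apply: corrP => //.
  - exact: genG1_free.
  - exact/mds_of_sel/genG1_sel.
  - by apply: genG2_free; rewrite (leq_trans (leq_subr _ _) bn).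
split.
  move=> rM; split=> //; split; first exact: leq_subr.
  move=> E hE; apply/corrG; apply: rM; apply/(gen_equiv _ db bn).
  exact/corrGen.
move=> [_ [_ hR]] A hA.
pose E : {set 'I_m * 'I_n} := [set pq | pq.2 \notin A pq.1].
have eA : (fun i => ~: [set j | (i, j) \in E]) = A.
  apply: functional_extensionality => i; apply/setP => j.
  by rewrite !inE negbK.
rewrite -eA; apply/corrG; apply: hR; apply/corrGen; rewrite eA.
exact/(gen_equiv _ db bn).
Qed.
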